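(* Consider the averaged Ćuk converter $$-L_1\dot I_1=(1-u)V_1-V_s,\quad -L_2\dot I_2=uV_1+V_2,\quad C_1\dot V_1=(1-u)I_1+uI_2,\quad C_2\dot V_2=I_2-GV_2,$$ with scalar constants $L_1,L_2,C_1,C_2>0$, $G\ge0$, $V_s\in\mathbb{R}$, extended by $\dot u=\upsilon$. Let $I=(I_1,I_2)$, $V=(V_1,V_2)$, $L=\mathrm{diag}(L_1,L_2)$, $C=\mathrm{diag}(C_1,C_2)$. Then this system is passive with respect to the storage function $S=\tfrac12\dot I^\top L\dot I+\tfrac12\dot V^\top C\dot V$ and the port-variables $\dot u$ and $y=\dot V_1(I_2-I_1)-V_1(\dot I_2-\dot I_1)$, i.e. $\dot S\le\dot u\,y$.
   Context: $I_1,I_2$ are inductor currents, $V_1,V_2$ capacitor voltages, $u\in[0,1]$ the duty cycle (averaged model). *)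

(* Defs.v *)
From Stdlib Require Import Reals.
From Coquelicot Require Import Coquelicot.
Open Scope R_scope.

Definition cuk_storage (L1 L2 C1 C2 : R) (I1 I2 V1 V2 : R -> R) (t : R) : R :=
  / 2 * (L1 * (Derive I1 t) ^ 2 + L2 * (Derive I2 t) ^ 2)
  + / 2 * (C1 * (Derive V1 t) ^ 2 + C2 * (Derive V2 t) ^ 2).

Definition cuk_output (I1 I2 V1 : R -> R) (t : R) : R :=
  Derive V1 t * (I2 t - I1 t) - V1 t * (Derive I2 t - Derive I1 t).

(* Main.v *)
Require Import Defs.
From Stdlib Require Import Reals Lra Psatz.
From Coquelicot Require Import Coquelicot.
Open Scope R_scope.

Theorem lemma6 (L1 L2 C1 C2 G Vs : R)
  (HL1 : 0 < L1) (HL2 : 0 < L2) (HC1 : 0 < C1) (HC2 : 0 < C2) (HG : 0 <= G)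
  (I1 I2 V1 V2 u : R -> R)
  (dI1 : forall t, ex_derive I1 t) (dI2 : forall t, ex_derive I2 t)
  (dV1 : forall t, ex_derive V1 t) (dV2 : forall t, ex_derive V2 t)
  (du : forall t, ex_derive u t)
  (hu : forall t, 0 <= u t <= 1)
  (E1 : forall t, - L1 * Derive I1 t = (1 - u t) * V1 t - Vs)
  (E2 : forall t, - L2 * Derive I2 t = u t * V1 t + V2 t)
  (E3 : forall t, C1 * Derive V1 t = (1 - u t) * I1 t + u t * I2 t)
  (E4 : forall t, C2 * Derive V2 t = I2 t - G * V2 t) :
  forall t,
    ex_derive (cuk_storage L1 L2 C1 C2 I1 I2 V1 V2) t /\
    Derive (cuk_storage L1 L2 C1 C2 I1 I2 V1 V2) t
      <= Derive u t * cuk_output I1 I2 V1 t.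
Proof.
  intro t.
  assert (F1 : forall s, Derive I1 s = - ((1 - u s) * V1 s - Vs) / L1).
  { intro s. rewrite <- E1. field. lra. }
  assert (F2 : forall s, Derive I2 s = - (u s * V1 s + V2 s) / L2).
  { intro s. rewrite <- E2. field. lra. }
  assert (F3 : forall s, Derive V1 s = ((1 - u s) * I1 s + u s * I2 s) / C1).
  { intro s. rewrite <- E3. field. lra. }
  assert (F4 : forall s, Derive V2 s = (I2 s - G * V2 s) / C2).
  { intro s. rewrite <- E4. field. lra. }
  set (g := fun s => / 2 * (L1 * (- ((1 - u s) * V1 s - Vs) / L1) ^ 2
                          + L2 * (- (u s * V1 s + V2 s) / L2) ^ 2)
                   + / 2 * (C1 * (((1 - u s) * I1 s + u s * I2 s) / C1) ^ 2
                          + C2 * ((I2 s - G * V2 s) / C2) ^ 2)).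
  assert (Hg : forall s, g s = cuk_storage L1 L2 C1 C2 I1 I2 V1 V2 s).
  { intro s. unfold g, cuk_storage. rewrite F1, F2, F3, F4. reflexivity. }
  assert (HD : is_derive g t (Derive u t * cuk_output I1 I2 V1 t - G * (Derive V2 t) ^ 2)).
  { unfold g. auto_derive.
    - repeat split; auto.
    - unfold cuk_output. change (fun x => u x) with u; repeat (rewrite F1 || rewrite F2 || rewrite F3 || rewrite F4); field; lra. }
  assert (HD' : is_derive (cuk_storage L1 L2 C1 C2 I1 I2 V1 V2) t
                  (Derive u t * cuk_output I1 I2 V1 t - G * (Derive V2 t) ^ 2)).
  { apply is_derive_ext with g; auto. }
  split.
  - eexists; eauto.
  - rewrite (is_derive_unique _ _ _ HD'). nra.
Qed.
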